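(* Assume $L_1\subseteq\bigcup_{\alpha\in\Sigma^\kappa}\Sigma^*\alpha\Sigma^*\bar\alpha$ and $L_2\subseteq\bigcup_{\alpha\in\Sigma^\kappa}\alpha\Sigma^*\bar\alpha\Sigma^*$. Let $M=\mathcal{I}\times\mathcal{F}$ where $\mathcal{I},\mathcal{F}$ are the initial and final states of $\mathcal{A}$; for $\mu=(I,F)\in M$ with $F=((d_1,d_2),e_1,e_2,\kappa)$ let $R_\mu$ be the set of labels of paths in $\mathcal{A}$ from $I$ to $F$ and $B_\mu=B(d_1,d_2,e_1,e_2)$. Let $\sigma=\max_{\mu\in M}\lambda_{B_\mu}$, $\rho=\max_{\mu\in M}\lambda_{R_\mu}$ and $\lambda=\max\{\lambda_{L_1},\lambda_{L_2}\}$. Then $\lambda=\max\{\sigma,\rho\}$.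
   Context: $\Sigma$ is a finite alphabet with at least two letters with an involution $a\mapsto\bar a$ ($\bar{\bar a}=a$), extended to words by $\overline{a_1\cdots a_m}=\bar a_m\cdots\bar a_1$ and to languages elementwise. $\kappa$ is a fixed positive integer. $L_1,L_2$ are regular; $\mathcal{A}_1=(Q_1,\Sigma,E_1,\{q_{01}\},F_1)$ is a complete DFA accepting $L_1$, $\mathcal{A}_2=(Q_2,\Sigma,E_2,\{q_{02}\},F_2)$ a complete DFA accepting $\overline{L_2}$; $p\cdot w$ is the state reached from $p$ on $w$. Growth indicator: $\lambda_L=\inf\{\lambda\ge0:\exists c>0\ \forall m: |L\cap\Sigma^m|\le c\lambda^m\}$. Construction of $\mathcal{A}$: $Q_{12}=\{(q_{01}\cdot w,q_{02}\cdot w):w\in\Sigma^*\}$ with $(p_1,p_2)\cdot w=(p_1\cdot w,p_2\cdot w)$. For $(p_1,p_2,q_1,q_2)\in Q_1\times Q_2\times Q_1\times Q_2$ let $B(p_1,p_2,q_1,q_2)=\{w:p_1\cdot w=q_1,\ p_2\cdot\bar w=q_2\}$; the quadruple is a basic bridge if this set is nonempty. States of $\mathcal{A}$ are all $((p_1,p_2),q_1,q_2,\ell)$ with $(p_1,p_2)\in Q_{12}$, $q_i\in Q_i$, $\ell\in\{0,\dots,\kappa\}$, $(p_1,p_2,q_1,q_2)$ a basic bridge. For $a\in\Sigma$, $P\in Q_{12}$, $q_i\in Q_i$, there is an $a$-arc from $(P,q_1\cdot\bar a,q_2\cdot\bar a,\ell)$ to $(P\cdot a,q_1,q_2,\ell')$,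 provided both are states, exactly when: $\ell=\ell'=0$ and $q_1\cdot\bar a\notin F_1$, $q_2\cdot\bar a\notin F_2$; or $\ell=0,\ell'=1$ and ($q_1\cdot\bar a\in F_1$ or $q_2\cdot\bar a\in F_2$); or $1\le\ell<\kappa$ and $\ell'=\ell+1$. Initial states: $((q_{01},q_{02}),q_1',q_2',0)$; final states: those with $\ell=\kappa$. $\mathcal{A}$ is trimmed: states not reachable from an initial state, or from which no final state is reachable, are removed. *)

(* Defs.v *)
From HB Require Import structures.
From mathcomp Require Import all_boot all_order all_algebra.
From mathcomp Require Import boolp classical_sets reals.
Set Implicit Arguments. Unset Strict Implicit. Unset Printing Implicit Defensive.
Import Order.TTheory GRing.Theory Num.Theory.

Record dfa (Σ : finType) := DFA {
  dstate : finType;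
  dstep : dstate -> Σ -> dstate;
  dinit : dstate;
  dfinal : pred dstate }.
Arguments dfinal {Σ} d _.
Arguments dinit {Σ} d.

Section Words.
Variable Σ : finType.

Definition drun (A : dfa Σ) (p : dstate A) (w : seq Σ) : dstate A :=
  foldl (@dstep _ A) p w.

Definition accepts (A : dfa Σ) (w : seq Σ) : bool := dfinal A (drun (dinit A) w).

Definition wbar (bar : Σ -> Σ) (w : seq Σ) : seq Σ := rev (map bar w).

Definition count_len (L : seq Σ -> Prop) (m : nat) : nat :=
  #|[set t : m.-tuple Σ | `[< L (val t) >] ]|.

Definition growth (R : realType) (L : seq Σ -> Prop) : R :=
  inf (fun l : R => (0 <= l)%R /\
        exists c : R, (0 < c)%R /\
          forall m : nat, ((count_len L m)%:R <= c * l ^+ m)%R).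

Fixpoint walk (S : Type) (E : S -> Σ -> S -> Prop) (s : S) (w : seq Σ) (t : S)
  : Prop :=
  match w with
  | [::] => s = t
  | a :: w' => exists s1, E s a s1 /\ walk E s1 w' t
  end.
End Words.

Section Construction.
Variables (Σ : finType) (bar : Σ -> Σ) (kappa : nat) (A1 A2 : dfa Σ).

Definition astate : finType :=
  ((dstate A1 * dstate A2) * dstate A1 * dstate A2 * 'I_kappa.+1)%type.

Definition inQ12 (P : dstate A1 * dstate A2) : Prop :=
  exists w : seq Σ, P = (drun (dinit A1) w, drun (dinit A2) w).

Definition Bset (p1 : dstate A1) (p2 : dstate A2) (q1 : dstate A1)
  (q2 : dstate A2) : seq Σ -> Prop :=
  fun w => drun p1 w = q1 /\ drun p2 (wbar bar w) = q2.

Definition basic_bridge p1 p2 q1 q2 : Prop := exists w, Bset p1 p2 q1 q2 w.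

Definition is_state (s : astate) : Prop :=
  let: (P, q1, q2, l) := s in inQ12 P /\ basic_bridge P.1 P.2 q1 q2.

Definition arc (s : astate) (a : Σ) (t : astate) : Prop :=
  is_state s /\ is_state t /\
  let: (P, r1, r2, l) := s in
  let: (P', q1, q2, l') := t in
  [/\ P' = (dstep P.1 a, dstep P.2 a),
      r1 = dstep q1 (bar a), r2 = dstep q2 (bar a) &
      [\/ [/\ val l = 0, val l' = 0, ~~ dfinal A1 r1 & ~~ dfinal A2 r2],
          [/\ val l = 0, val l' = 1 & (dfinal A1 r1 || dfinal A2 r2)]
        | [/\ 1 <= val l, val l < kappa & val l' = (val l).+1] ] ].

Definition initial (s : astate) : Prop :=
  is_state s /\ s.1.1.1 = (dinit A1, dinit A2) /\ val s.2 = 0.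

Definition final (s : astate) : Prop := is_state s /\ val s.2 = kappa.

Definition trim (s : astate) : Prop :=
  (exists i w, initial i /\ walk arc i w s) /\
  (exists f w, final f /\ walk arc s w f).

Definition tarc (s : astate) (a : Σ) (t : astate) : Prop :=
  arc s a t /\ trim s /\ trim t.

Definition inM (mu : astate * astate) : Prop :=
  [/\ trim mu.1, initial mu.1, trim mu.2 & final mu.2].

Definition Rlang (mu : astate * astate) : seq Σ -> Prop :=
  fun w => walk tarc mu.1 w mu.2.

Definition Blang (mu : astate * astate) : seq Σ -> Prop :=
  let: (P, e1, e2, _) := mu.2 in Bset P.1 P.2 e1 e2.
End Construction.

(* Main.v *)
Require Import Defs.
From HB Require Import structures.
From mathcomp Require Import all_boot all_order all_algebra.
From mathcomp Require Import boolp classical_sets reals.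
Import Order.TTheory GRing.Theory Num.Theory.
From mathcomp Require Import ring zify.




Section Growth.
Variables (R : realType) (Sg : finType) (a0 : Sg).
Local Open Scope ring_scope.
Implicit Types (X Y : seq Sg -> Prop).

Definition bnd X (l : R) := exists c : R, 0 < c /\
  forall m, (count_len X m)%:R <= c * l ^+ m.

Lemma count_le_all X m : (count_len X m <= #|Sg| ^ m)%N.
Proof. by rewrite /count_len -card_tuple max_card. Qed.

Lemma growth_lb X : lbound (fun l : R => (0 <= l)%R /\
        exists c : R, (0 < c)%R /\
          forall m : nat, ((count_len X m)%:R <= c * l ^+ m)%R) 0.
Proof. by move=> l []. Qed.

Lemma growth_ne X : ((fun l : R => (0 <= l)%R /\
        exists c : R, (0 < c)%R /\
          forall m : nat, ((count_len X m)%:R <= c * l ^+ m)%R) !=set0)%classic.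
Proof.
exists (#|Sg|%:R); split; first exact: ler0n.
exists 1; split => // m; rewrite mul1r -natrX ler_nat; exact: count_le_all.
Qed.

Lemma growth_ge0 X : 0 <= growth R X.
Proof. rewrite /growth. have := lb_le_inf (growth_ne X) (growth_lb X). exact. Qed.

Lemma growth_le X l : 0 <= l -> bnd X l -> growth R X <= l.
Proof.
move=> l0 [c [c0 h]]; rewrite /growth; apply: (ge_inf _ ).
  by exists 0; exact: growth_lb.
by split => //; exists c.
Qed.

Lemma growth_bnd X e : 0 < e -> bnd X (growth R X + e).
Proof.
move=> e0; have lt : growth R X < growth R X + e by rewrite ltrDl.
have [y [y0 [c [c0 h]]] ylt] := inf_lt (growth_ne X) lt.
exists c; split => // m; apply: (le_trans (h m)); rewrite ler_pM2l //.
have ge : 0 <= growth R X + e := addr_ge0 (growth_ge0 X) (ltW e0).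
by rewrite lerXn2r // ?nnegrE // ltW.
Qed.

Lemma growth_le_eps X g : 0 <= g -> (forall e, 0 < e -> bnd X (g + e)) ->
  growth R X <= g.
Proof.
move=> g0 h; apply/ler_addgt0Pr => e e0; apply: growth_le (h e e0).
by rewrite addr_ge0 // ltW.
Qed.

Lemma bnd_mono X l l' : bnd X l -> 0 <= l -> l <= l' -> bnd X l'.
Proof.
move=> [c [c0 h]] l0 ll; exists c; split => // m; apply: (le_trans (h m)).
by rewrite ler_pM2l // lerXn2r // nnegrE // (le_trans l0).
Qed.

Lemma growth_bnd_le X g e : growth R X <= g -> 0 < e -> bnd X (g + e).
Proof.
move=> hg e0; apply: (@bnd_mono X _ _ (growth_bnd X e e0)).
  by rewrite addr_ge0 ?growth_ge0 ?ltW.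
by rewrite lerD2r.
Qed.

Lemma count_inj X Y (f : seq Sg -> seq Sg) m m' :
  (forall w, size w = m -> X w -> size (f w) = m' /\ Y (f w)) ->
  (forall u v, size u = m -> size v = m -> X u -> X v -> f u = f v -> u = v) ->
  (count_len X m <= count_len Y m')%N.
Proof.
move=> hf hi; rewrite /count_len.
pose F := fun t : m.-tuple Sg => insubd (nseq_tuple m' a0) (f t) : m'.-tuple Sg.
have FE (t : m.-tuple Sg) : X t -> val (F t) = f t.
  by move=> Xt; rewrite val_insubd (hf _ (size_tuple t) Xt).1 eqxx.
rewrite -(@card_in_imset _ _ F); last first.
  move=> t1 t2; rewrite !inE => /asboolP X1 /asboolP X2 /(congr1 val).
  move/asboolP: X1 => X1; move/asboolP: X2 => X2.
  rewrite (FE _ X1) (FE _ X2) => /hi h; apply/val_inj; apply: h; rewrite ?size_tuple //.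
apply: subset_leq_card; apply/fintype.subsetP => y /imsetP [t]; rewrite inE => /asboolP Xt -> {y}.
by rewrite inE; apply/asboolP; rewrite FE //; exact: (hf _ (size_tuple t) Xt).2.
Qed.

Lemma growth_inj X Y (f : seq Sg -> seq Sg) k :
  (forall w, X w -> size (f w) = (size w + k)%N /\ Y (f w)) ->
  (forall u v, size u = size v -> X u -> X v -> f u = f v -> u = v) ->
  growth R X <= growth R Y.
Proof.
move=> hf hi; apply: growth_le_eps; first exact: growth_ge0.
move=> e e0; have [c [c0 h]] := growth_bnd Y e e0.
have ge0 : 0 < growth R Y + e by rewrite ltr_wpDl ?growth_ge0.
exists (c * (growth R Y + e) ^+ k); split; first by rewrite mulr_gt0 // exprn_gt0.
move=> m.
apply: (le_trans _ (_ : c * (growth R Y + e) ^+ (m + k) <= _)).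
  rewrite (le_trans _ (h (m + k)%N)) // ler_nat.
  apply: (count_inj X Y f).
    by move=> w sw Xw; have [s1 s2] := hf w Xw; rewrite s1 sw.
  by move=> u v su sv; apply: hi; rewrite su sv.
by rewrite addnC exprD mulrA.
Qed.

Lemma growth_mono X Y : (forall w, X w -> Y w) -> growth R X <= growth R Y.
Proof.
move=> h; apply: (growth_inj X Y id 0%N) => //.
by move=> w Xw; rewrite addn0; split => //; apply: h.
Qed.

Lemma growth_empty X g : 0 <= g -> (forall w, ~ X w) -> growth R X <= g.
Proof.
move=> g0 hX; apply: growth_le => //; exists 1; split => // m.
have -> : count_len X m = 0%N.
  rewrite /count_len; apply/eqP; rewrite cards_eq0; apply/eqP/setP => t.
  by rewrite !inE; apply/asboolP => /hX.
by rewrite mul1r exprn_ge0.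
Qed.


Lemma card_bigcup_le (T I : finType) (A : I -> {set T}) :
  (#|\bigcup_i A i| <= \sum_i #|A i|)%N.
Proof.
apply: (big_rec2 (fun (S : {set T}) n => #|S| <= n)%N); first by rewrite cards0.
move=> i S n _ h; rewrite cardsU (leq_trans (leq_subr _ _)) // leq_add2l //.
Qed.
Arguments card_bigcup_le {T I}.

Lemma count_union (T : finType) (Xs : T -> seq Sg -> Prop) m :
  (count_len (fun w => exists i, Xs i w) m <= \sum_i count_len (Xs i) m)%N.
Proof.
rewrite /count_len.
apply: (leq_trans _ (card_bigcup_le (fun i => [set t : m.-tuple Sg | `[< Xs i t >]]))).
apply: subset_leq_card; apply/fintype.subsetP => t; rewrite inE => /asboolP [i Xi].
by apply/finset.bigcupP; exists i => //; rewrite inE; apply/asboolP.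
Qed.

Lemma growth_union (T : finType) (Xs : T -> seq Sg -> Prop) g : 0 <= g ->
  (forall i, growth R (Xs i) <= g) -> growth R (fun w => exists i, Xs i w) <= g.
Proof.
move=> g0 h; apply: growth_le_eps => // e e0.
have /choice [C hC] : forall i, exists c : R, 0 < c /\
    forall m, (count_len (Xs i) m)%:R <= c * (g + e) ^+ m.
  by move=> i; exact: growth_bnd_le (h i) e0.
exists (\sum_i C i + 1); split.
  by rewrite ltr_wpDl // sumr_ge0 // => i _; apply: ltW (hC i).1.
move=> m; apply: le_trans (_ : (\sum_i count_len (Xs i) m)%:R <= _).
  by rewrite ler_nat count_union.
rewrite natr_sum mulrDl mul1r.
apply: le_trans (_ : \sum_i C i * (g+e)^+m <= _).
  by apply: ler_sum => i _; exact: (hC i).2.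
by rewrite -mulr_suml lerDl exprn_ge0 // addr_ge0 // ltW.
Qed.

Definition lcat X Y w := exists u v, w = u ++ v /\ X u /\ Y v.

Lemma count_cat X Y n :
  (count_len (lcat X Y) n <= \sum_(a < n.+1) count_len X a * count_len Y (n - a))%N.
Proof.
rewrite /count_len.
pose S (a : 'I_n.+1) := [set t : n.-tuple Sg | `[< X (take a t) /\ Y (drop a t) >]].
apply: (@leq_trans #|\bigcup_a S a|).
  apply: subset_leq_card; apply/fintype.subsetP => t; rewrite inE => /asboolP [u [v [tuv [Xu Yv]]]].
  have su : (size u < n.+1)%N by rewrite ltnS -(size_tuple t) tuv size_cat leq_addr.
  apply/finset.bigcupP; exists (Ordinal su) => //; rewrite inE /=; apply/asboolP.
  by rewrite tuv take_size_cat // drop_size_cat.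
apply: (leq_trans (card_bigcup_le S)); apply: leq_sum => a _.
rewrite -cardsX.
pose F (t : n.-tuple Sg) := (insubd (nseq_tuple a a0) (take a t) : a.-tuple Sg,
   insubd (nseq_tuple (n - a) a0) (drop a t) : (n - a).-tuple Sg).
have ha : (a <= n)%N by rewrite -ltnS.
have F1 (t : n.-tuple Sg) : val (F t).1 = take a t.
  by rewrite val_insubd size_takel ?size_tuple // eqxx.
have F2 (t : n.-tuple Sg) : val (F t).2 = drop a t.
  by rewrite val_insubd size_drop size_tuple eqxx.
rewrite -(@card_in_imset _ _ F (S a)); last first.
  move=> t1 t2 _ _ e; apply/val_inj.
  have e1 := congr1 (fun p => val p.1) e; have e2 := congr1 (fun p => val p.2) e.
  rewrite /= !F1 in e1; rewrite /= !F2 in e2.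
  by rewrite -[val t1](cat_take_drop a) -[val t2](cat_take_drop a) e1 e2.
apply: subset_leq_card; apply/fintype.subsetP => y /imsetP [t]; rewrite inE => /asboolP [Xt Yt] -> {y}.
by rewrite finset.in_setX !inE F1 F2; apply/andP; split; apply/asboolP.
Qed.

Lemma bern (x d : R) n : 0 <= x -> 0 < d -> n.+1%:R * x ^+ n * d <= (x + d) ^+ n.+1.
Proof.
move=> x0 d0; elim: n => [|n IH]; first by rewrite expr0 expr1 mulr1 mul1r lerDr.
have e1 : n.+2%:R * x ^+ n.+1 * d = x * (n.+1%:R * x ^+ n * d) + x ^+ n.+1 * d.
  by rewrite exprS -addn1 natrD; ring.
rewrite e1 [(x + d) ^+ n.+2]exprS mulrDl lerD //; first by rewrite ler_wpM2l.
rewrite [_ * d]mulrC; apply: ler_wpM2l; first exact: ltW.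
apply: lerXn2r; rewrite ?nnegrE //; first exact: addr_ge0 x0 (ltW d0).
by rewrite lerDl ltW.
Qed.

Lemma growth_cat X Y g : 0 <= g -> growth R X <= g -> growth R Y <= g ->
  growth R (lcat X Y) <= g.
Proof.
move=> g0 hX hY; apply: growth_le_eps => // e e0.
have h0 : 0 < e / 2 by rewrite divr_gt0.
have [cX [cX0 bX]] := growth_bnd_le X g (e/2) hX h0.
have [cY [cY0 bY]] := growth_bnd_le Y g (e/2) hY h0.
set x := g + e / 2.
have x0 : 0 <= x by rewrite addr_ge0 // ltW.
have xe : x + e / 2 = g + e by rewrite /x -addrA -splitr.
have ge0 : 0 < g + e by rewrite ltr_wpDl.
exists (cX * cY * ((g + e) / (e / 2))); split.
  by apply: mulr_gt0; [exact: mulr_gt0 | exact: divr_gt0].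
move=> n.
apply: le_trans (_ : (\sum_(a < n.+1) count_len X a * count_len Y (n - a))%:R <= _).
  by rewrite ler_nat count_cat.
rewrite natr_sum; apply: le_trans (_ : \sum_(a < n.+1) (cX * cY * x ^+ n) <= _).
  apply: ler_sum => a _; rewrite natrM.
  have -> : cX * cY * x ^+ n = (cX * x ^+ a) * (cY * x ^+ (n - a)).
    by rewrite mulrACA -exprD subnKC // -ltnS.
  by apply: ler_pM => //; rewrite ler0n.
rewrite sumr_const card_ord -[_ *+ n.+1]mulr_natl.
have hb := bern x (e / 2) n x0 h0; rewrite xe in hb.
have key : n.+1%:R * x ^+ n <= (g + e) / (e / 2) * (g + e) ^+ n.
  by rewrite mulrAC ler_pdivlMr // -exprS.
rewrite mulrCA -[_ * _ * (g + e) ^+ n]mulrA ler_wpM2l //.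
by rewrite mulr_ge0 // ltW.
Qed.

Lemma growth_len k g : 0 <= g -> growth R (fun w : seq Sg => size w = k) <= g.
Proof.
move=> g0; apply: growth_le_eps => // e e0.
have ek : 0 < e ^+ k := exprn_gt0 _ e0.
have ge0 : 0 <= g + e by rewrite addr_ge0 // ltW.
exists ((#|Sg| ^ k)%:R / e ^+ k + 1); split.
  by rewrite ltr_wpDl // divr_ge0 // ltW.
move=> m; case: (eqVneq m k) => [->|mk].
  apply: le_trans (_ : (#|Sg| ^ k)%:R <= _); first by rewrite ler_nat count_le_all.
  apply: le_trans (_ : (#|Sg| ^ k)%:R / e ^+ k * (g + e) ^+ k <= _); last first.
    by rewrite mulrDl lerDl mul1r exprn_ge0.
  apply: le_trans (_ : (#|Sg| ^ k)%:R / e ^+ k * e ^+ k <= _).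
    by rewrite divfK // gt_eqF.
  apply: ler_wpM2l; first by rewrite divr_ge0 // ltW.
  by rewrite lerXn2r ?nnegrE ?(ltW e0) // lerDr.
have -> : count_len (fun w : seq Sg => size w = k) m = 0%N.
  rewrite /count_len; apply/eqP; rewrite cards_eq0; apply/eqP/setP => t.
  rewrite !inE; apply/asboolP; rewrite size_tuple => mk'.
  by move: mk; rewrite mk' eqxx.
by rewrite mulr_ge0 ?exprn_ge0 // addr_ge0 // divr_ge0 // ltW.
Qed.

End Growth.


Section Auto.
Variables (Sg : finType) (bar : Sg -> Sg) (kappa : nat) (A1 A2 : dfa Sg).
Hypothesis barK : forall a, bar (bar a) = a.
Hypothesis kappa0 : (0 < kappa)%N.

Local Notation st_t := (astate kappa A1 A2).
Local Notation wb := (wbar bar).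
Local Notation arcA := (@Defs.arc Sg bar kappa A1 A2).
Local Notation q01 := (dinit A1).
Local Notation tarcA := (@tarc Sg bar kappa A1 A2).
Local Notation q02 := (dinit A2).

Lemma drun_cat (A : dfa Sg) (p : dstate A) u v : drun p (u ++ v) = drun (drun p u) v.
Proof. by rewrite /drun foldl_cat. Qed.

Lemma drun_rcons (A : dfa Sg) (p : dstate A) u a : drun p (rcons u a) = dstep (drun p u) a.
Proof. by rewrite /drun foldl_rcons. Qed.

Lemma drun_split (A : dfa Sg) (p : dstate A) j w :
  drun p w = drun (drun p (take j w)) (drop j w).
Proof. by rewrite -drun_cat cat_take_drop. Qed.

Lemma wbar_cat u v : wb (u ++ v) = wb v ++ wb u.
Proof. by rewrite /wbar map_cat rev_cat. Qed.

Lemma wbarK u : wb (wb u) = u.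
Proof.
rewrite /wbar map_rev revK -map_comp.
by rewrite (@eq_map _ _ _ id) ?map_id // => a /=; rewrite barK.
Qed.

Lemma wbar_cons a u : wb (a :: u) = rcons (wb u) (bar a).
Proof. by rewrite /wbar /= rev_cons. Qed.

Lemma size_wbar u : size (wb u) = size u.
Proof. by rewrite /wbar size_rev size_map. Qed.

Lemma wbar_inj u v : wb u = wb v -> u = v.
Proof. by move=> h; rewrite -(wbarK u) h wbarK. Qed.

Lemma walk_cat (S : Type) (E : S -> Sg -> S -> Prop) s u v t :
  walk E s (u ++ v) t <-> exists m, walk E s u m /\ walk E m v t.
Proof.
elim: u s => [|a u IH] s /=.
  by split => [h|[m [-> h]]]; [exists s|].
split => [[s1 [e h]]|[m [[s1 [e h1]] h2]]].
  by have [m [h1 h2]] := (IH s1).1 h; exists m; split => //; exists s1.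
by exists s1; split => //; apply/(IH s1).2; exists m.
Qed.

Lemma walk_mono (S : Type) (E E' : S -> Sg -> S -> Prop) s w t :
  (forall s a t, E s a t -> E' s a t) -> walk E s w t -> walk E' s w t.
Proof.
move=> h; elim: w s => [|a w IH] s //= [s1 [e hw]].
by exists s1; split; [exact: h | exact: IH].
Qed.

Lemma walk_P (s t : st_t) w : walk arcA s w t ->
  [/\ t.1.1.1 = (drun s.1.1.1.1 w, drun s.1.1.1.2 w),
      s.1.1.2 = drun t.1.1.2 (wb w) & s.1.2 = drun t.1.2 (wb w)].
Proof.
elim: w s => [|a w IH] s /=.
  by move=> <-; case: s => [[[[p1 p2] ?] ?] ?].
move=> [s1 [hA hw]]; have [h1 h2 h3] := IH _ hw.
move: hA; case: s => [[[P r1] r2] l]; case: s1 hw h1 h2 h3 => [[[P' q1] q2] l'] /= hw h1 h2 h3.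
move=> [_ [_ [eP e1 e2 _]]].
split; first by rewrite h1 eP.
  by rewrite wbar_cons drun_rcons -h2 e1.
by rewrite wbar_cons drun_rcons -h3 e2.
Qed.

Lemma walk_l1 (s t : st_t) w : walk arcA s w t -> (1 <= val s.2)%N ->
  val t.2 = (val s.2 + size w)%N.
Proof.
elim: w s => [|a w IH] s /=; first by move=> <-; rewrite addn0.
move=> [s1 [hA hw]] hs; move: hA; case: s hs => [[[P r1] r2] l] /= hs.
case: s1 hw => [[[P' q1] q2] l'] hw /= [_ [_ [_ _ _ hl]]].
case: hl => [[l0 _ _ _]|[l0 _ _]|[_ _ hl']]; try by rewrite l0 in hs.
by rewrite (IH _ hw) /= hl' ?addSnnS.
Qed.

Definition trigs (t : st_t) u :=
  dfinal A1 (drun t.1.1.2 (wb u)) || dfinal A2 (drun t.1.2 (wb u)).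

Lemma walk_l0 (s t : st_t) w : walk arcA s w t -> val s.2 = 0%N ->
  val t.2 = 0%N \/ exists wa u, [/\ w = wa ++ u, size u = val t.2 & trigs t u].
Proof.
elim: w s => [|a w IH] s /=; first by move=> <- ->; left.
move=> [s1 [hA hw]] hs.
have hwalk : walk arcA s (a :: w) t by exists s1.
have [_ h2 h3] := walk_P _ _ _ hwalk.
move: hA h2 h3; case: s hs hwalk => [[[P r1] r2] l] /= hs _.
case: s1 hw => [[[P' q1] q2] l'] hw /= [_ [_ [_ e1 e2 hl]]] h2 h3.
case: hl => [[_ l0 _ _]|[_ l1 ht]|[hl _ _]]; last by move: hl hs; case: l => m ? /= h1 h0; rewrite h0 in h1.
- have [->|[wa [u [-> sz tr]]]] := IH _ hw l0; first by left.
  by right; exists (a :: wa), u.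
- right; exists [::], (a :: w); split => //.
    by rewrite (walk_l1 _ _ _ hw) /= l1 // add1n.
  by rewrite /trigs -h2 -h3.
Qed.

Lemma trig_info (i f : st_t) w : initial bar i -> final bar f -> walk arcA i w f ->
  exists wa u, [/\ w = wa ++ u, size u = kappa,
     f.1.1.1 = (drun q01 w, drun q02 w) & trigs f u].
Proof.
move=> [_ [hP hl]] [_ hf] hw.
have [h1 _ _] := walk_P _ _ _ hw.
have [h|[wa [u [e sz tr]]]] := walk_l0 _ _ _ hw hl.
  by exfalso; move: kappa0; rewrite -hf h.
by exists wa, u; split => //; [rewrite sz hf | rewrite h1 hP].
Qed.

Lemma walk_tarc (s t : st_t) w :
  (exists i v, initial bar i /\ walk arcA i v s) ->
  (exists f v, final bar f /\ walk arcA t v f) ->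
  walk arcA s w t -> walk tarcA s w t.
Proof.
elim: w s => [|a w IH] s //= hs ht [s1 [hA hw]].
have [f [v [hf hv]]] := ht.
have [i [u [hi hu]]] := hs.
have hs1 : exists i v, initial bar i /\ walk arcA i v s1.
  exists i, (u ++ [:: a]); split => //; apply/walk_cat; exists s; split => //.
  by exists s1.
exists s1; split; last exact: IH.
split => //; split.
- split => //; exists f, (a :: w ++ v); split => //; exists s1; split => //.
  by apply/walk_cat; exists t.
- split => //; exists f, (w ++ v); split => //; apply/walk_cat; exists t.
  by split.
Qed.

Variable a0 : Sg.

Definition e1w (w x : seq Sg) := drun q01 (w ++ x).
Definition e2w (w x : seq Sg) := drun q02 (w ++ wb x).
Definition st (w x : seq Sg) (j l : nat) : st_t :=
  ((drun q01 (take j w), drun q02 (take j w)), drun (e1w w x) (wb (drop j w)),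
    drun (e2w w x) (wb (drop j w)), inord l).
Definition trigw w x j :=
  dfinal A1 (drun (e1w w x) (wb (drop j w))) || dfinal A2 (drun (e2w w x) (wb (drop j w))).

Lemma st_state w x j l : is_state bar (st w x j l).
Proof.
rewrite /is_state /st; split; first by exists (take j w).
exists (drop j w ++ x ++ wb (drop j w)); split => /=.
  by rewrite /e1w !drun_cat (drun_split _ _ j w).
by rewrite !wbar_cat wbarK /e2w !drun_cat (drun_split _ _ j w).
Qed.

Lemma st_arc w x j l l' : (j < size w)%N -> (l <= kappa)%N -> (l' <= kappa)%N ->
  [\/ [/\ l = 0%N, l' = 0%N & ~~ trigw w x j], [/\ l = 0%N, l' = 1%N & trigw w x j]
    | [/\ (1 <= l)%N, (l < kappa)%N & l' = l.+1]] ->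
  arcA (st w x j l) (nth a0 w j) (st w x j.+1 l').
Proof.
move=> hj hl hl' hc; split; first exact: st_state.
split; first exact: st_state.
rewrite /st /=; split.
- by rewrite (take_nth a0 hj) !drun_rcons.
- by rewrite (drop_nth a0 hj) wbar_cons drun_rcons.
- by rewrite (drop_nth a0 hj) wbar_cons drun_rcons.
- rewrite !inordK ?ltnS //; move: hc; rewrite /trigw negb_or.
  case=> [[-> -> /andP[n1 n2]]|[-> -> t]|[h1 h2 ->]].
  + by constructor 1.
  + by constructor 2.
  + by constructor 3.
Qed.

Lemma walk_tail w x i0 d : forall j, (i0 < j)%N -> (j <= i0 + kappa)%N ->
  (i0 + kappa - j)%N = d -> (i0 + kappa <= size w)%N ->
  walk arcA (st w x j (j - i0)) (take d (drop j w)) (st w x (i0 + kappa) kappa).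
Proof.
elim: d => [|d IH] j hij hj hd hk.
  have ej : j = (i0 + kappa)%N by lia.
  by rewrite take0 /= ej addKn.
have hjs : (j < size w)%N by lia.
rewrite (drop_nth a0 hjs) /=.
exists (st w x j.+1 (j.+1 - i0)); split.
  apply: st_arc => //; try lia.
  by constructor 3; split; lia.
by apply: IH => //; lia.
Qed.

Lemma walk_head w x i0 d : (forall j, (j < i0)%N -> ~~ trigw w x j) -> trigw w x i0 ->
  (i0 + kappa <= size w)%N ->
  forall j, (j <= i0)%N -> (i0 - j)%N = d ->
  walk arcA (st w x j 0) (take (i0 + kappa - j) (drop j w)) (st w x (i0 + kappa) kappa).
Proof.
move=> hmin htr hk; elim: d => [|d IH] j hj hd.
  have ej : j = i0 by lia.
  rewrite ej; have hi : (i0 < size w)%N by lia.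
  have -> : (i0 + kappa - i0 = (kappa - 1).+1)%N by lia.
  rewrite (drop_nth a0 hi) /=.
  exists (st w x i0.+1 1); split.
    apply: st_arc => //; try lia.
    by constructor 2.
  have h := walk_tail w x i0 (kappa - 1) i0.+1 (ltnSn _) ltac:(lia) ltac:(lia) hk.
  by rewrite subSnn in h.
have hjs : (j < size w)%N by lia.
have -> : (i0 + kappa - j = (i0 + kappa - j.+1).+1)%N by lia.
rewrite (drop_nth a0 hjs) /=.
exists (st w x j.+1 0); split.
  apply: st_arc => //; try lia.
  by constructor 1; split => //; apply: hmin; lia.
by apply: IH; lia.
Qed.

Lemma decomp w x : (kappa <= size w)%N -> trigw w x (size w - kappa) ->
  exists K, [/\ (K <= size w)%N, inM bar (st w x 0 0, st w x K kappa)
     & Rlang bar (st w x 0 0, st w x K kappa) (take K w)].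
Proof.
move=> hk ht.
have ex : exists j, trigw w x j by exists (size w - kappa)%N.
case: (ex_minnP ex) => i0 ti0 hmin.
have hle : (i0 + kappa <= size w)%N by have := hmin _ ht; lia.
have hnt j : (j < i0)%N -> ~~ trigw w x j.
  by move=> hj; apply/negP => /hmin; lia.
have hw := walk_head w x i0 i0 hnt ti0 hle 0 (leq0n _) (subn0 _).
rewrite subn0 drop0 in hw.
have hi : initial bar (st w x 0 0).
  by split; [exact: st_state | split => //=; rewrite ?take0 ?inordK].
have hf : final bar (st w x (i0 + kappa) kappa).
  by split; [exact: st_state | rewrite /= inordK].
have hs : exists i v, initial bar i /\ walk arcA i v (st w x 0 0).
  by exists (st w x 0 0), [::].
have ht' : exists f v, final bar f /\ walk arcA (st w x (i0 + kappa) kappa) v f.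
  by exists (st w x (i0 + kappa) kappa), [::].
exists (i0 + kappa)%N; split => //.
  split => //=.
  - by split => //; exists (st w x (i0 + kappa) kappa), (take (i0 + kappa) w).
  - by split => //; exists (st w x 0 0), (take (i0 + kappa) w).
exact: walk_tarc hs ht' hw.
Qed.

End Auto.


Section Main.
Variables (R : realType) (Sg : finType) (bar : Sg -> Sg) (kappa : nat) (A1 A2 : dfa Sg)
  (L1 L2 : seq Sg -> Prop) (a0 : Sg).
Hypothesis barK : forall a, bar (bar a) = a.
Hypothesis kappa0 : (0 < kappa)%N.
Hypothesis hL1 : forall w, L1 w <-> accepts A1 w.
Hypothesis hL2 : forall w, L2 w <-> accepts A2 (wbar bar w).
Local Open Scope ring_scope.

Local Notation st_t := (astate kappa A1 A2).
Local Notation wb := (wbar bar).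
Local Notation arcA := (@Defs.arc Sg bar kappa A1 A2).
Local Notation tarcA := (@tarc Sg bar kappa A1 A2).
Local Notation q01 := (dinit A1).
Local Notation q02 := (dinit A2).
Local Notation inMA := (@inM Sg bar kappa A1 A2).
Local Notation gr := (growth R).

Let lam := Num.max (gr L1) (gr L2).

Lemma cat_prefK (u v c c' : seq Sg) : size u = size v -> u ++ c = v ++ c' -> u = v.
Proof.
by move=> s e; have := congr1 (take (size u)) e; rewrite take_size_cat // s take_size_cat.
Qed.

Lemma cat_sufK (u v c : seq Sg) : u ++ v = u ++ c -> v = c.
Proof.
by move=> e; have := congr1 (drop (size u)) e; rewrite !drop_size_cat.
Qed.

Lemma lam_ge0 : 0 <= lam.
Proof. by rewrite le_max growth_ge0. Qed.

Lemma B_le mu : inMA mu -> gr (Blang bar mu) <= lam.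
Proof.
case: mu => I [[[[p1 p2] e1] e2] l] [_ hI [[i [w [hi hw]]] _] hF] /=.
have [wa [u [ew su hP tr]]] := trig_info _ _ _ _ _ kappa0 _ _ _ hi hF hw.
case: hP => hp1 hp2.
case/orP: tr => /= tr.
- apply: le_trans (_ : gr L1 <= _); last by rewrite le_max lexx.
  apply: (growth_inj _ _ a0 _ _ (fun x => w ++ x ++ wb u) (size w + kappa)).
    move=> x [bx1 bx2]; split.
      by rewrite !size_cat size_wbar su; lia.
    by apply/hL1; rewrite /accepts !drun_cat -hp1 bx1.
  move=> x y sxy _ _ e.
  by apply: (cat_prefK _ _ (wb u) (wb u) sxy); apply: (cat_sufK w).
- apply: le_trans (_ : gr L2 <= _); last by rewrite le_max lexx orbT.
  apply: (growth_inj _ _ a0 _ _ (fun x => u ++ x ++ wb w) (size w + kappa)).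
    move=> x [bx1 bx2]; split.
      by rewrite !size_cat size_wbar su; lia.
    apply/hL2; rewrite /accepts !wbar_cat ?wbarK // -!catA !drun_cat -hp2 bx2 //.
  move=> x y sxy _ _ e.
  by apply: (cat_prefK _ _ (wb w) (wb w) sxy); apply: (cat_sufK u).
Qed.

Lemma R_le mu : inMA mu -> gr (Rlang bar mu) <= lam.
Proof.
case: mu => I F [] /= trI hI trF hF.
have hFs := hF.1.
move: hFs; case: F hF trF => [[[[p1 p2] e1] e2] l] hF trF /= [_ [x0 [bx1 bx2]]].
have info w : Rlang bar (I, (p1, p2, e1, e2, l)) w ->
    exists wa u, [/\ w = wa ++ u, size u = kappa,
     (p1, p2) = (drun q01 w, drun q02 w) & trigs Sg bar kappa A1 A2 (p1, p2, e1, e2, l) u].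
  move=> hw; have hw' : walk arcA I w (p1, p2, e1, e2, l).
    by apply: (walk_mono _ _ tarcA) hw => s a t [].
  exact: (trig_info _ _ _ _ _ kappa0 I _ w hI hF hw').
pose X (b : bool) w := [/\ Rlang bar (I, (p1, p2, e1, e2, l)) w, (kappa <= size w)%N &
   if b then L1 (w ++ x0 ++ wb (drop (size w - kappa) w))
   else L2 (drop (size w - kappa) w ++ x0 ++ wb w)].
apply: le_trans (_ : gr (fun w => exists b, X b w) <= _).
  apply: (growth_mono _ _ a0) => w hw.
  have [wa [u [ew su hP tr]]] := info w hw.
  case: hP => hp1 hp2.
  have hd : drop (size w - kappa) w = u.
    by rewrite ew size_cat su addnK drop_size_cat.
  have hk : (kappa <= size w)%N by rewrite ew size_cat su leq_addl.
  case/orP: tr => /= tr.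
    exists true; split => //; rewrite hd.
    by apply/hL1; rewrite /accepts !drun_cat -hp1 bx1.
  exists false; split => //; rewrite hd.
  by apply/hL2; rewrite /accepts !wbar_cat ?wbarK // -!catA !drun_cat -hp2 bx2.
apply: growth_union; first exact: lam_ge0.
case.
- apply: le_trans (_ : gr L1 <= _); last by rewrite le_max lexx.
  apply: (growth_inj _ _ a0 _ _ (fun w => w ++ x0 ++ wb (drop (size w - kappa) w)) (size x0 + kappa)).
    move=> w [_ hk hL]; split => //.
    by rewrite !size_cat size_wbar size_drop; lia.
  move=> u v suv _ _ e.
  exact: (cat_prefK _ _ _ _ suv e).
- apply: le_trans (_ : gr L2 <= _); last by rewrite le_max lexx orbT.
  apply: (growth_inj _ _ a0 _ _ (fun w => drop (size w - kappa) w ++ x0 ++ wb w) (size x0 + kappa)).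
    move=> w [_ hk hL]; split => //.
    by rewrite !size_cat size_wbar size_drop; lia.
  move=> u v suv _ _ e.
  have := congr1 wb e; rewrite !wbar_cat !wbarK // -!catA.
  exact: cat_prefK.
Qed.

Hypothesis hF1 : forall w, L1 w -> exists (alpha : kappa.-tuple Sg) (u v : seq Sg),
      w = u ++ val alpha ++ v ++ wbar bar (val alpha).
Hypothesis hF2 : forall w, L2 w -> exists (alpha : kappa.-tuple Sg) (u v : seq Sg),
      w = val alpha ++ u ++ wbar bar (val alpha) ++ v.

Let sigma : R := \big[Num.max/0%R]_(mu | `[< inMA mu >]) gr (Blang bar mu).
Let rho : R := \big[Num.max/0%R]_(mu | `[< inMA mu >]) gr (Rlang bar mu).
Let M := Num.max sigma rho.

Lemma bigmax_ge0 (F : st_t * st_t -> R) : (forall mu, 0 <= F mu) ->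
  0 <= \big[Num.max/0%R]_(mu | `[< inMA mu >]) F mu.
Proof. by move=> hF; elim/big_ind: _ => // x y hx hy; rewrite le_max hx. Qed.

Lemma M_ge0 : 0 <= M.
Proof. by rewrite le_max bigmax_ge0 // => mu; exact: growth_ge0. Qed.

Lemma sigma_M mu : inMA mu -> gr (Blang bar mu) <= M.
Proof.
move=> h; rewrite le_max; apply/orP; left.
by apply: (le_bigmax_cond _ (P := fun mu => `[< inMA mu >])); apply/asboolP.
Qed.

Lemma rho_M mu : inMA mu -> gr (Rlang bar mu) <= M.
Proof.
move=> h; rewrite le_max; apply/orP; right.
by apply: (le_bigmax_cond _ (P := fun mu => `[< inMA mu >])); apply/asboolP.
Qed.

Lemma M_lam : M <= lam.
Proof.
rewrite ge_max; apply/andP; split; apply/bigmax_leP; split; try exact: lam_ge0.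
  by move=> mu /asboolP; exact: B_le.
by move=> mu /asboolP; exact: R_le.
Qed.

Local Notation T := ((st_t * st_t) * dstate A1 * dstate A2)%type.

Definition X (tau : T) w := inMA tau.1.1 /\ Rlang bar tau.1.1 w.
Definition Y1 (tau : T) y := [/\ inMA tau.1.1, drun tau.1.1.2.1.1.1.1 y = tau.1.2,
   drun tau.2 (wb y) = tau.1.1.2.1.2 &
   exists c, drun tau.1.2 c = tau.1.1.2.1.1.2 /\ drun tau.1.1.2.1.1.1.2 (wb c) = tau.2].
Definition Y2 (tau : T) y := [/\ inMA tau.1.1, drun tau.1.1.2.1.1.1.2 y = tau.2,
   drun tau.1.2 (wb y) = tau.1.1.2.1.1.2 &
   exists c, drun tau.2 c = tau.1.1.2.1.2 /\ drun tau.1.1.2.1.1.1.1 (wb c) = tau.1.2].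
Definition Z (w : seq Sg) := size w = kappa.

Lemma X_le tau : gr (X tau) <= M.
Proof.
case: (pselect (inMA tau.1.1)) => h; last first.
  by apply: growth_empty; [exact: M_ge0 | move=> w [] ].
apply: le_trans (rho_M _ h); apply: (growth_mono _ _ a0) => w []; done.
Qed.

Lemma Y1_le tau : gr (Y1 tau) <= M.
Proof.
case: tau => [[[I F] s] t].
case: (pselect (inMA (I, F) /\ exists c, drun s c = F.1.1.2 /\ drun F.1.1.1.2 (wb c) = t))
   => [[hM [c [hc1 hc2]]] | hn]; last first.
  by apply: growth_empty; [exact: M_ge0 | move=> y [hM _ _ hc]; apply: hn].
apply: le_trans (sigma_M _ hM).
move: hc1 hc2; case: F hM => [[[[p1 p2] e1] e2] l] hM /= hc1 hc2.
apply: (growth_inj _ _ a0 _ _ (fun y => y ++ c) (size c)).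
  move=> y [_ /= h1 h2 _]; split; first by rewrite size_cat.
  by split; [rewrite drun_cat h1 hc1 | rewrite wbar_cat drun_cat hc2 h2].
by move=> u v suv _ _ e; exact: (cat_prefK _ _ _ _ suv e).
Qed.

Lemma Y2_le tau : gr (Y2 tau) <= M.
Proof.
case: tau => [[[I F] s] t].
case: (pselect (inMA (I, F) /\ exists c, drun t c = F.1.2 /\ drun F.1.1.1.1 (wb c) = s))
   => [[hM [c [hc1 hc2]]] | hn]; last first.
  by apply: growth_empty; [exact: M_ge0 | move=> y [hM _ _ hc]; apply: hn].
apply: le_trans (sigma_M _ hM).
move: hc1 hc2; case: F hM => [[[[p1 p2] e1] e2] l] hM /= hc1 hc2.
apply: (growth_inj _ _ a0 _ _ (fun y => wb c ++ wb y) (size c)).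
  move=> y [_ /= h1 h2 _]; split; first by rewrite size_cat !size_wbar addnC.
  split; first by rewrite drun_cat hc2 h2.
  by rewrite wbar_cat !wbarK // drun_cat h1 hc1.
by move=> u v suv _ _ e; apply: (wbar_inj _ _ barK); exact: (cat_sufK _ _ _ e).
Qed.

Lemma U_le (Y : T -> seq Sg -> Prop) : (forall tau, gr (Y tau) <= M) ->
  gr (fun z => exists tau, lcat Sg (X tau) (lcat Sg (Y tau) Z) z) <= M.
Proof.
move=> hY; apply: growth_union; first exact: M_ge0.
move=> tau; apply: (growth_cat _ _ a0); [exact: M_ge0 | exact: X_le |].
apply: (growth_cat _ _ a0); [exact: M_ge0 | exact: hY | exact: growth_len M_ge0].
Qed.

Lemma L1_cover z : L1 z -> exists tau : T, lcat Sg (X tau) (lcat Sg (Y1 tau) Z) z.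
Proof.
move=> hz; have [alpha [u [v ez]]] := hF1 z hz.
set w := u ++ val alpha.
have hk : (kappa <= size w)%N by rewrite size_cat size_tuple leq_addl.
have hd : drop (size w - kappa) w = val alpha.
  by rewrite /w size_cat size_tuple addnK drop_size_cat.
have ez' : z = w ++ v ++ wb alpha by rewrite ez /w -catA.
have ht : trigw Sg bar A1 A2 w v (size w - kappa).
  rewrite /trigw hd; apply/orP; left.
  by rewrite /e1w -drun_cat -catA -ez'; apply/hL1.
have [K [hK hM hR]] := decomp _ _ _ _ _ barK kappa0 a0 w v hk ht.
exists (((st Sg bar kappa A1 A2 w v 0 0, st Sg bar kappa A1 A2 w v K kappa), e1w Sg A1 w v), drun q02 w).
exists (take K w), (drop K w ++ v ++ wb alpha); split.
  by rewrite ez' [RHS]catA cat_take_drop.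
split; first by split.
exists (drop K w ++ v), (wb alpha); split; first by rewrite catA.
split; last by rewrite /Z size_wbar size_tuple.
rewrite /Y1 /st /=; split => //.
- by rewrite -drun_cat catA cat_take_drop.
- by rewrite wbar_cat /e2w !drun_cat.
- exists (wb (drop K w)); split => //.
  by rewrite wbarK // -drun_cat cat_take_drop.
Qed.

Lemma L2_cover z : accepts A2 z -> exists tau : T, lcat Sg (X tau) (lcat Sg (Y2 tau) Z) z.
Proof.
move=> hz; have hz2 : L2 (wb z) by apply/hL2; rewrite wbarK.
have [alpha [u [v ez]]] := hF2 _ hz2.
set w := wb v ++ val alpha.
have hk : (kappa <= size w)%N by rewrite size_cat size_tuple leq_addl.
have hd : drop (size w - kappa) w = val alpha.
  by rewrite /w size_cat size_tuple addnK drop_size_cat.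
have ez' : z = w ++ wb u ++ wb alpha.
  by rewrite -[z](wbarK _ bar barK) ez !wbar_cat wbarK // /w -!catA.
have ht : trigw Sg bar A1 A2 w u (size w - kappa).
  rewrite /trigw hd; apply/orP; right.
  by rewrite /e2w -drun_cat -catA -ez'.
have [K [hK hM hR]] := decomp _ _ _ _ _ barK kappa0 a0 w u hk ht.
exists (((st Sg bar kappa A1 A2 w u 0 0, st Sg bar kappa A1 A2 w u K kappa), drun q01 w), e2w Sg bar A2 w u).
exists (take K w), (drop K w ++ wb u ++ wb alpha); split.
  by rewrite ez' [RHS]catA cat_take_drop.
split; first by split.
exists (drop K w ++ wb u), (wb alpha); split; first by rewrite catA.
split; last by rewrite /Z size_wbar size_tuple.
rewrite /Y2 /st /=; split => //.
- by rewrite -drun_cat catA cat_take_drop.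
- by rewrite wbar_cat wbarK // /e1w !drun_cat.
- exists (wb (drop K w)); split => //.
  by rewrite wbarK // -drun_cat cat_take_drop.
Qed.

Lemma lam_M : lam <= M.
Proof.
rewrite ge_max; apply/andP; split.
  apply: le_trans (U_le _ Y1_le); apply: (growth_mono _ _ a0); exact: L1_cover.
apply: le_trans (_ : gr (accepts A2) <= _).
  apply: (growth_inj _ _ a0 _ _ wb 0).
    by move=> w hw; rewrite size_wbar addn0; split => //; apply/hL2.
  by move=> u v _ _ _; exact: wbar_inj.
apply: le_trans (U_le _ Y2_le); apply: (growth_mono _ _ a0); exact: L2_cover.
Qed.

Lemma main_eq : lam = M.
Proof. by apply/eqP; rewrite eq_le lam_M M_lam. Qed.

End Main.

Theorem lemma12 (R : realType) (Σ : finType) (bar : Σ -> Σ) (kappa : nat)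
  (A1 A2 : dfa Σ) (L1 L2 : seq Σ -> Prop) :
  1 < #|Σ| ->
  (forall a, bar (bar a) = a) ->
  0 < kappa ->
  (forall w, L1 w <-> accepts A1 w) ->
  (forall w, L2 w <-> accepts A2 (wbar bar w)) ->
  (forall w, L1 w -> exists (alpha : kappa.-tuple Σ) (u v : seq Σ),
      w = u ++ val alpha ++ v ++ wbar bar (val alpha)) ->
  (forall w, L2 w -> exists (alpha : kappa.-tuple Σ) (u v : seq Σ),
      w = val alpha ++ u ++ wbar bar (val alpha) ++ v) ->
  let sigma : R := \big[Num.max/0%R]_(mu | `[< @inM Σ bar kappa A1 A2 mu >])
                     growth R (@Blang Σ bar kappa A1 A2 mu) in
  let rho : R := \big[Num.max/0%R]_(mu | `[< @inM Σ bar kappa A1 A2 mu >])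
                     growth R (@Rlang Σ bar kappa A1 A2 mu) in
  Num.max (growth R L1) (growth R L2) = Num.max sigma rho.
Proof.
Proof.
move=> hS barK k0 hL1 hL2 hF1 hF2 sigma rho.
have [a0 _] : exists a0 : Σ, True.
  by case/card_gt0P: (ltnW hS) => a _; exists a.
exact: (main_eq R Σ bar kappa A1 A2 L1 L2 a0 barK k0 hL1 hL2 hF1 hF2).
Qed.
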